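(* Let $K$ be a totally real number field. If $\alpha\in\mathcal{O}_K^+$ lies on the sail $\mathcal{S}_K$ (i.e. $\iota_M(\alpha)\in\mathcal{S}_K$), then $\alpha$ is indecomposable.
   Context: Let $n=[K:\mathbb{Q}]$, $\tau_1,\dots,\tau_n$ the real embeddings, $\iota_M:K\to\mathbb{R}^n$, $\alpha\mapsto(\tau_1(\alpha),\dots,\tau_n(\alpha))$ the Minkowski embedding and $\Lambda=\iota_M(\mathcal{O}_K)$. $\mathcal{O}_K^+$ is the set of totally positive elements of $\mathcal{O}_K$, so $\iota_M(\mathcal{O}_K^+)=\Lambda\cap\mathbb{R}_{>0}^n$. The Klein polyhedron is the convex hull $\mathcal{K}_K=\operatorname{Conv}(\Lambda\cap\mathbb{R}_{>0}^n)$ and the sail $\mathcal{S}_K$ is its boundary. An element $\alpha\in\mathcal{O}_K^+$ is indecomposable if it cannot be written as $\beta+\gamma$ with $\beta,\gamma\in\mathcal{O}_K^+$. *)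

(* Defs.v *)
From HB Require Import structures.
From mathcomp Require Import all_boot all_order all_algebra all_field.
From mathcomp Require Import all_classical all_reals all_analysis.
Set Implicit Arguments. Unset Strict Implicit. Unset Printing Implicit Defensive.
Import Order.TTheory GRing.Theory Num.Theory.
Import numFieldNormedType.Exports.
Local Open Scope ring_scope.
Local Open Scope classical_set_scope.

Definition is_alg_int (K : fieldExtType rat) (a : K) : Prop :=
  exists p : {poly int}, p \is monic /\ root (map_poly (fun z : int => z%:~R : K) p) a.

Definition degQ (K : fieldExtType rat) : nat := \dim (fullv : {vspace K}).

Definition tot_pos_int (K : fieldExtType rat) (R : realType) (n : nat)
  (tau : 'I_n -> {rmorphism K -> R}) (a : K) : Prop :=
  is_alg_int a /\ forall i, 0 < tau i a.

Definition minkowski_emb (K : fieldExtType rat) (R : realType) (n : nat)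
  (tau : 'I_n -> {rmorphism K -> R}) (a : K) : 'rV[R]_n :=
  \row_i tau i a.

Definition conv_hull (R : realType) (n : nat) (A : set 'rV[R]_n) : set 'rV[R]_n :=
  [set x | exists (m : nat) (lam : 'I_m -> R) (v : 'I_m -> 'rV[R]_n),
      (forall j, 0 <= lam j) /\ \sum_(j < m) lam j = 1 /\
      (forall j, A (v j)) /\ x = \sum_(j < m) lam j *: v j].

Definition boundary (R : realType) (n : nat) (A : set 'rV[R]_n) : set 'rV[R]_n :=
  closure A `\` interior A.

(* Klein polyhedron: convex hull of Lambda ∩ R_{>0}^n = iota_M(O_K^+) *)
Definition klein_polyhedron (K : fieldExtType rat) (R : realType) (n : nat)
  (tau : 'I_n -> {rmorphism K -> R}) : set 'rV[R]_n :=
  conv_hull (minkowski_emb tau @` [set a | tot_pos_int tau a]).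

Definition sail (K : fieldExtType rat) (R : realType) (n : nat)
  (tau : 'I_n -> {rmorphism K -> R}) : set 'rV[R]_n :=
  boundary (klein_polyhedron tau).

Definition indecomposable (K : fieldExtType rat) (R : realType) (n : nat)
  (tau : 'I_n -> {rmorphism K -> R}) (a : K) : Prop :=
  tot_pos_int tau a /\
  ~ (exists b c : K, tot_pos_int tau b /\ tot_pos_int tau c /\ a = b + c).

(* Main.v *)
Require Import Defs.
From HB Require Import structures.
From mathcomp Require Import all_boot all_order all_algebra all_field.
From mathcomp Require Import all_classical all_reals all_analysis.
Import Order.TTheory GRing.Theory Num.Theory.
Import numFieldNormedType.Exports.
From mathcomp Require Import ring lra.
Local Open Scope ring_scope.
Lemma scale_int_root (K : fieldExtType rat) (x : K) (q : {poly int}) :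
  (1 < size q)%N -> root (map_poly (fun z : int => z%:~R : K) q) x ->
  is_alg_int ((lead_coef q)%:~R * x).
Proof.
move=> sq rq.
set m := (size q).-1.
have m1 : (1 <= m)%N by rewrite /m; case: (size q) sq => //= k; rewrite ltnS.
have szq : size q = m.+1 by rewrite /m prednK // (ltn_trans _ sq).
set l := lead_coef q.
pose E k := if k == m then 1 else q`_k * l ^+ (m.-1 - k).
exists (\poly_(k < m.+1) E k); split.
  rewrite monicE lead_coef_poly //= /E eqxx ?oner_neq0 //.
rewrite /root; apply/eqP.
rewrite (@horner_coef_wide _ m.+1); last first.
  by apply: leq_trans (size_poly _ _) _; rewrite size_poly.
have h0 : (map_poly (fun z : int => z%:~R : K) q).[x] = 0 by apply/eqP.
rewrite (@horner_coef_wide _ m.+1) in h0; last by apply: leq_trans (size_poly _ _) _; rewrite szq.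
transitivity ((l%:~R : K) ^+ m.-1 * \sum_(i < m.+1)
   (map_poly (fun z : int => z%:~R : K) q)`_i * x ^+ i); last first.
  by rewrite h0 mulr0.
rewrite mulr_sumr; apply: eq_bigr => i _.
rewrite !coef_map /= coef_poly ltn_ord /E.
case: eqP => [-> | ne].
  rewrite exprMn mulrA /=. 
  have -> : q`_m = l by rewrite /l lead_coefE szq.
  by rewrite mul1r mulrA -exprSr prednK.
have lim : (i <= m.-1)%N.
  rewrite -ltnS prednK // ltn_neqAle; apply/andP; split; first by apply/eqP.
  by rewrite -ltnS ltn_ord.
rewrite rmorphM rmorphXn /= exprMn -{2}(subnK lim) exprD.
by rewrite !mulrA; congr (_ * _); rewrite [in RHS]mulrC mulrA.
Qed.

Lemma int_scale (K : fieldExtType rat) (x : K) :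
  exists l : int, l != 0 /\ is_alg_int (l%:~R * x).
Proof.
have [p mp rp] := alg_integral x.
have [q [a a0 ep]] := rat_poly_scale p.
have szp : (1 < size p)%N.
  rewrite -(size_map_poly (in_alg K)); apply: (root_size_gt1 _ rp).
  by rewrite map_poly_eq0 monic_neq0.
have szq : (1 < size q)%N by rewrite -(size_rat_int_poly q) -(size_scale _ (invr_neq0 (x := (a%:~R : rat)) _)) ?intr_eq0 // -ep.
exists (lead_coef q); split.
  by rewrite lead_coef_eq0 -size_poly_eq0 -lt0n (ltn_trans _ szq).
apply: scale_int_root => //.
move: rp; rewrite ep map_polyZ /root hornerZ mulf_eq0 => /orP [|].
  by rewrite fmorph_eq0 invr_eq0 intr_eq0 (negbTE a0).
rewrite -map_poly_comp.
have -> : map_poly (in_alg K \o intr) q = map_poly (fun z : int => z%:~R : K) q.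
  by apply: eq_map_poly => z /=; rewrite scaler_int.
by [].
Qed.
Lemma dedekind (K : fieldType) (R : fieldType) n (tau : 'I_n -> {rmorphism K -> R})
  (tau_inj : forall i j, (forall x, tau i x = tau j x) -> i = j)
  (c : 'I_n -> R) : (forall x, \sum_i c i * tau i x = 0) -> forall i, c i = 0.
Proof.
suff H : forall s (c : 'I_n -> R), (#|[set i | c i != 0%R]| <= s)%N ->
   (forall x, \sum_i c i * tau i x = 0) -> forall i, c i = 0.
  by apply: (H n) => //; apply: leq_trans (max_card _) _; rewrite card_ord.
elim=> [|s IH] {}c hs rel i0.
  apply/eqP; apply/negP => /negP nz.
  have hin : i0 \in [set i | c i != 0] by rewrite inE.
  have : (0 < #|[set i | c i != 0%R]|)%N by apply/card_gt0P; exists i0.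
  by rewrite leqn0 in hs; rewrite (eqP hs).
apply/eqP; apply/negP => /negP nz.
have [[j [hj nzj]] | hno] := pselect (exists j, j != i0 /\ c j != 0); last first.
  have := rel 1.
  rewrite (bigD1 i0) //= big1 ?addr0 ?rmorph1 ?mulr1 => [/eqP|j hj]; first by rewrite (negbTE nz).
  case: (c j =P 0) => [->|/eqP cj]; first by rewrite mul0r.
  by exfalso; apply: hno; exists j.
have [y hy] : exists y, tau j y != tau i0 y.
  case: (pselect (exists y, tau j y != tau i0 y)) => // H.
  have /tau_inj E : forall x, tau j x = tau i0 x.
    move=> x; apply/eqP/negPn/negP => h; apply: H; by exists x.
  by rewrite E eqxx in hj.
pose c' k := c k * (tau k y - tau i0 y).
have rel' : forall x, \sum_i c' i * tau i x = 0.
  move=> x.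
  transitivity (\sum_i c i * tau i (y * x) - tau i0 y * \sum_i c i * tau i x).
    rewrite mulr_sumr -sumrB; apply: eq_bigr => k _.
    by rewrite /c' rmorphM /=; ring.
  by rewrite !rel mulr0 subr0.
have hs' : (#|[set i | c' i != 0%R]| <= s)%N.
  have sub : [set i | c' i != 0] \subset [set i | c i != 0] :\ i0.
    apply/fintype.subsetP => k; rewrite !inE /c'.
    case: (k =P i0) => [->|/eqP kn]; first by rewrite subrr mulr0 eqxx.
    move=> h; apply/andP; split => //; apply: contraNneq h => ->; by rewrite mul0r.
  apply: leq_trans (subset_leq_card sub) _.
  rewrite -ltnS; apply: leq_trans hs.
  by rewrite (cardsD1 i0 [set i | c i != 0%R]) inE nz.
have := IH c' hs' rel' j.
by move/eqP; rewrite /c' mulf_eq0 (negbTE nzj) subr_eq0 (negbTE hy).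
Qed.

Lemma tau_scale (K : fieldExtType rat) (R : realType) (f : {rmorphism K -> R}) (q : rat) (v : K) :
  f (q *: v) = ratr q * f v.
Proof.
by rewrite -mulr_algl rmorphM /=; congr (_ * _); apply: (fmorph_eq_rat (f \o in_alg K)).
Qed.

Lemma basis_exists (K : fieldExtType rat) (R : realType)
  (tau : 'I_(degQ K) -> {rmorphism K -> R})
  (tau_inj : forall i j, (forall x, tau i x = tau j x) -> i = j) :
  exists w : 'I_(degQ K) -> K, (forall j, is_alg_int (w j)) /\
    (\matrix_(j, i) tau i (w j)) \in unitmx.
Proof.
pose e (j : 'I_(degQ K)) := (vbasis (fullv : {vspace K}))`_j.
have /choice [l hl] : forall j : 'I_(degQ K), exists l : int, l != 0 /\ is_alg_int (l%:~R * e j).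
  by move=> j; apply: int_scale.
exists (fun j => (l j)%:~R * e j); split; first by move=> j; case: (hl j).
set M := \matrix_(j, i) _.
apply/negPn/negP => nu.
have : kermx M^T != 0 by rewrite kermx_eq0 row_free_unit unitmx_tr.
case/rowV0Pn => u /sub_kermxP uM unz.
pose c : 'I_(degQ K) -> R := fun i => u 0 i.
have cw : forall j, \sum_i c i * tau i ((l j)%:~R * e j) = 0.
  move=> j; have := congr1 (fun A : 'M[R]_(1, degQ K) => A 0 j) uM.
  by rewrite !mxE => h; rewrite -[X in _ = X]h; apply: eq_bigr => i _; rewrite !mxE.
have ce : forall j, \sum_i c i * tau i (e j) = 0.
  move=> j; have := cw j.
  have -> : \sum_i c i * tau i ((l j)%:~R * e j) = (l j)%:~R * \sum_i c i * tau i (e j).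
    by rewrite mulr_sumr; apply: eq_bigr => i _; rewrite rmorphM rmorph_int /= mulrCA.
  by move/eqP; rewrite mulf_eq0 intr_eq0 (negbTE (proj1 (hl j))) /= => /eqP.
have call : forall x, \sum_i c i * tau i x = 0.
  move=> x; rewrite (coord_vbasis (memvf x)).
  transitivity (\sum_i \sum_(j < \dim (fullv : {vspace K})) ratr (coord (vbasis fullv) j x) * (c i * tau i (e j))).
    apply: eq_bigr => i _; rewrite rmorph_sum mulr_sumr; apply: eq_bigr => j _.
    by rewrite tau_scale mulrCA.
  rewrite exchange_big /=; apply: big1 => j _.
  by rewrite -mulr_sumr ce mulr0.
have := @dedekind _ _ _ tau tau_inj _ call.
move=> c0; apply/negP: unz; apply/negPn/eqP; apply/rowP => i; rewrite mxE.
exact: c0.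
Qed.
Local Open Scope classical_set_scope.
Lemma conv_fin (R : realType) n (A : set 'rV[R]_n) (T : finType) (lam : T -> R)
  (v : T -> 'rV[R]_n) : (forall t, 0 <= lam t) -> \sum_t lam t = 1 ->
  (forall t, A (v t)) -> conv_hull A (\sum_t lam t *: v t).
Proof.
move=> l0 l1 Av.
exists #|T|, (fun i => lam (enum_val i)), (fun i => v (enum_val i)).
have bij : {on [pred i : T | true], bijective (@enum_val T T)}.
  by apply: onW_bij; apply: enum_val_bij.
split=> //; split; first by rewrite -l1 (reindex _ bij).
split=> //; by rewrite (reindex _ bij).
Qed.
Lemma interior_of (R : realType) n (A : set 'rV[R]_n) (x : 'rV[R]_n) (e : R) : 0 < e ->
  (forall y : 'rV[R]_n, (forall i, `|x 0 i - y 0 i| < e) -> A y) -> interior A x.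
Proof.
move=> e0 H; rewrite /interior; apply/nbhs_ballP; exists e => // y [_ Hy].
apply: H => i; have := Hy 0 i. by rewrite /ball /=.
Qed.

Lemma conv3 (R : realType) n m (A : set 'rV[R]_n) (p q : 'rV[R]_n) (r : 'I_m -> 'rV[R]_n)
  (al be : R) (ga : 'I_m -> R) : 0 <= al -> 0 <= be -> (forall j, 0 <= ga j) ->
  al + be + \sum_j ga j = 1 -> A p -> A q -> (forall j, A (r j)) ->
  conv_hull A (al *: p + be *: q + \sum_j ga j *: r j).
Proof.
move=> a0 b0 g0 s1 Ap Aq Ar.
pose lam (t : bool + 'I_m) := match t with inl true => al | inl false => be | inr j => ga j end.
pose v (t : bool + 'I_m) := match t with inl true => p | inl false => q | inr j => r j end.
have -> : al *: p + be *: q + \sum_j ga j *: r j = \sum_t lam t *: v t.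
  by rewrite big_sumType big_bool.
apply: conv_fin => [[[]|j]|| [[]|j]] //=.
by rewrite big_sumType big_bool.
Qed.

Lemma ai_int (K : fieldExtType rat) (x : K) : is_alg_int x <-> integralOver (intr : int -> K) x.
Proof. by split => [[p [mp rp]] | [p mp rp]]; exists p. Qed.

Lemma le_sum1 (R : realDomainType) (I : finType) (F : I -> R) i :
  (forall j, 0 <= F j) -> F i <= \sum_j F j.
Proof. by move=> h; rewrite (bigD1 i) //= lerDl; apply: sumr_ge0 => j _; exact: h. Qed.


Theorem theorem2p4 (K : fieldExtType rat) (R : realType)
  (tau : 'I_(degQ K) -> {rmorphism K -> R})
  (tau_inj : forall i j, (forall x, tau i x = tau j x) -> i = j)
  (a : K) :
  tot_pos_int tau a -> sail tau (minkowski_emb tau a) -> indecomposable tau a.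
Proof.
move=> ha hs; split => // [[b [c [hb [hc eab]]]]].
case: hs => _; apply.
have [w [hw Mu]] := @basis_exists _ _ tau tau_inj.
set M := \matrix_(j, i) tau i (w j) in Mu.
set Ri := invmx M.
have key : forall k i, \sum_j Ri k j * tau i (w j) = (k == i)%:R.
  move=> k i; have := congr1 (fun A : 'M[R]_(degQ K) => A k i) (mulVmx Mu).
  by rewrite !mxE => <-; apply: eq_bigr => j _; rewrite mxE.
pose S := \sum_k \sum_j `|Ri k j|.
have S0 : 0 <= S by apply: sumr_ge0 => k _; apply: sumr_ge0 => j _.
have cpos : forall i, 0 < tau i c := hc.2.
pose T := \sum_i \sum_j `|tau i (w j)| / tau i c.
pose N := (Num.truncn T).+1.
have hN : T < N%:R by apply: truncnS_gt.
have N1 : 1 <= N%:R :> R by rewrite ler1n.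
have N0 : 0 < N%:R :> R by rewrite ltr0n.
have bound : forall i j, `|tau i (w j)| < N%:R * tau i c.
  move=> i j; rewrite -ltr_pdivrMr //; apply: le_lt_trans hN.
  apply: (le_trans (@le_sum1 _ _ (fun j => `|tau i (w j)| / tau i c) j _)).
    by move=> k; apply: divr_ge0 => //; apply: ltW.
  apply: (@le_sum1 _ _ (fun i => \sum_j `|tau i (w j)| / tau i c) i).
  by move=> k; apply: sumr_ge0 => l _; apply: divr_ge0 => //; apply: ltW.
pose y := b + N%:R * c.
have ypos : forall s, is_alg_int s -> (forall i, `|tau i s| < N%:R * tau i c) ->
    tot_pos_int tau (y + s).
  move=> s hsi hsb; split.
    apply/ai_int; apply: integral_add; last exact/ai_int.
    apply: integral_add; first by apply/ai_int; case: hb.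
    apply: integral_mul; first exact: integral_nat.
    by apply/ai_int; case: hc.
  move=> i; rewrite !rmorphD rmorphM rmorph_nat /=.
  have := hsb i; rewrite ltr_norml => /andP [h1 _].
  have := hb.2 i; lra.
have Ab : klein_polyhedron tau = conv_hull (minkowski_emb tau @` [set x | tot_pos_int tau x]) by [].
pose eps := (N%:R * (S + 1))^-1.
have eps0 : 0 < eps by rewrite invr_gt0 mulr_gt0 // ltr_pwDr.
have epsE : eps * (N%:R * (S + 1)) = 1 by rewrite mulVf // gt_eqF // mulr_gt0 // ltr_pwDr.
apply: (@interior_of R (degQ K) (klein_polyhedron tau) (minkowski_emb tau a) eps eps0) => z hz.
pose d i := z 0 i - tau i a.
have hd : forall i, `|d i| < eps.
  by move=> i; have := hz i; rewrite mxE distrC.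
pose t j := N%:R * \sum_k d k * Ri k j.
have st : \sum_j `|t j| <= 1.
  have : \sum_j `|t j| <= N%:R * (eps * S).
    rewrite /S exchange_big /= mulr_sumr mulr_sumr; apply: ler_sum => j _.
    rewrite /t normrM ger0_norm ?ler0n //; apply: ler_wpM2l; first exact: ltW.
    rewrite mulr_sumr; apply: le_trans (ler_norm_sum _ _ _) _; apply: ler_sum => k _.
    by rewrite normrM; apply: ler_wpM2r => //; apply: ltW.
  move=> h; apply: le_trans h _.
  have e0 := ltW eps0; have n0 := ltW N0.
  nra.
pose sg j := if 0 <= t j then w j else - w j.
have sgP : forall i j, `|t j| * tau i (sg j) = t j * tau i (w j).
  move=> i j; rewrite /sg; case: ifP => h; first by rewrite ger0_norm.
  by rewrite ltr0_norm ?rmorphN ?mulrNN // ltNge h.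
have E1 : forall i, \sum_j t j * tau i (w j) = N%:R * d i.
  move=> i; rewrite /t; under eq_bigr do rewrite -mulrA mulr_suml.
  rewrite -mulr_sumr exchange_big /=; congr (_ * _).
  under eq_bigr do rewrite -(eq_bigr _ (fun j _ => mulrA _ _ _)) -mulr_sumr key.
  rewrite (bigD1 i) //= eqxx mulr1 big1 ?addr0 // => k /negbTE ->.
  by rewrite mulr0.
pose U := \sum_j `|t j|.
pose A := minkowski_emb tau @` [set x | tot_pos_int tau x].
have ymem : forall s, is_alg_int s -> (forall i, `|tau i s| < N%:R * tau i c) ->
    A (minkowski_emb tau (y + s)).
  by move=> s h1 h2; exists (y + s) => //; apply: ypos.
have bmem : A (minkowski_emb tau b) by exists b.
have zero_int : is_alg_int (0 : K).
  by exists 'X; split; [apply: monicX | rewrite map_polyX rootX].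
have y0 : A (minkowski_emb tau y).
  have := ymem 0 zero_int; rewrite addr0; apply => i.
  by rewrite rmorph0 normr0 mulr_gt0.
have sgmem : forall j, A (minkowski_emb tau (y + sg j)).
  move=> j; apply: ymem.
    rewrite /sg; case: ifP => _ //; apply/ai_int; apply: integral_opp; exact/ai_int.
  by move=> i; rewrite /sg; case: ifP => _; rewrite ?rmorphN ?normrN bound.
have -> : z = (1 - N%:R^-1) *: minkowski_emb tau b + ((1 - U) / N%:R) *: minkowski_emb tau y
    + \sum_j (`|t j| / N%:R) *: minkowski_emb tau (y + sg j).
  apply/rowP => i; rewrite !mxE summxE.
  under eq_bigr do rewrite !mxE.
  have E2 : \sum_k `|t k| / N%:R * tau i (y + sg k) = U / N%:R * tau i y + d i.
    transitivity (\sum_k (`|t k| / N%:R * tau i y + N%:R^-1 * (t k * tau i (w k)))).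
      by apply: eq_bigr => k _; rewrite rmorphD /= -sgP; ring.
    by rewrite big_split /= -mulr_sumr E1 -mulr_suml -mulr_suml mulKf ?gt_eqF.
  rewrite E2 /d.
  have ty : tau i y = tau i b + N%:R * tau i c by rewrite rmorphD rmorphM rmorph_nat.
  rewrite ty eab rmorphD /=; field.
  by rewrite gt_eqF.
rewrite Ab; apply: conv3; last 3 first.
- exact: bmem.
- exact: y0.
- exact: sgmem.
- by rewrite subr_ge0 invf_le1.
- by apply: divr_ge0; [rewrite subr_ge0 | apply: ltW].
- by move=> j; apply: divr_ge0; [apply: normr_ge0 | apply: ltW].
- rewrite -mulr_suml -/U; field.
  by rewrite gt_eqF.
Qed.
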